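(* (a) Let $H$ be the graph obtained from the cycle $C_5$ by attaching one pendant edge. Then $\chi_i(H)=\chi_{i,2}(H)=4$ and $\chi_{i,1}(H)=5$. (b) For every $n\ge 1$, $\chi_{i,1}(K_{n,n})=2n$.
   Context: An incidence of a graph $G$ is a pair $(v,e)$ with $v\in e\in E(G)$; incidences $(v,e),(u,f)$ are adjacent if $v=u$, or $e=f$, or $vu\in\{e,f\}$; an incidence coloring gives adjacent incidences distinct colors; $\chi_i(G)$ is the least number of colors of an incidence coloring. For an incidence coloring $c$, $S^1_c(v)=\{c(u,uv):uv\in E(G)\}$. A $(k,p)$-incidence coloring is an incidence coloring with at most $k$ colors such that $|S^1_c(v)|\le p$ for every vertex $v$; $\chi_{i,p}(G)$ is the least $k$ for which $G$ admits a $(k,p)$-incidence coloring. *)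

(* Defs.v *)
From mathcomp Require Import all_boot.
Set Implicit Arguments. Unset Strict Implicit. Unset Printing Implicit Defensive.

Definition simple_graph (T : finType) (e : rel T) : Prop :=
  (forall x y, e x y = e y x) /\ (forall x, ~~ e x x).

Definition ed (T : finType) (x y : T) : {set T} := [set x; y].

(* Incidence (v, vw) is encoded by the ordered pair (v, w) with e v w. *)
Definition inc_adj (T : finType) (e : rel T) (v w u z : T) : bool :=
  [|| v == u,
      ed v w == ed u z
    | e v u && ((ed v u == ed v w) || (ed v u == ed u z))].

(* c v w is the colour of the incidence (v, vw); colours are 0..k-1,
   i.e. at most k colours are used. *)
Definition incidence_coloring (T : finType) (e : rel T) (k : nat)
    (c : T -> T -> nat) : Prop :=
  (forall v w, e v w -> c v w < k) /\
  (forall v w u z, e v w -> e u z -> (v, w) != (u, z) ->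
     inc_adj e v w u z -> c v w != c u z).

Definition S1 (T : finType) (e : rel T) (c : T -> T -> nat) (v : T) : seq nat :=
  undup [seq c u v | u <- enum T & e u v].

Definition ip_coloring (T : finType) (e : rel T) (k p : nat)
    (c : T -> T -> nat) : Prop :=
  incidence_coloring e k c /\ (forall v, size (S1 e c v) <= p).

Definition i_colorable (T : finType) (e : rel T) (k : nat) : Prop :=
  exists c, incidence_coloring e k c.

Definition ip_colorable (T : finType) (e : rel T) (k p : nat) : Prop :=
  exists c, ip_coloring e k p c.

Definition is_chi_i (T : finType) (e : rel T) (k : nat) : Prop :=
  i_colorable e k /\ forall k', i_colorable e k' -> k <= k'.

Definition is_chi_ip (T : finType) (e : rel T) (p k : nat) : Prop :=
  ip_colorable e k p /\ forall k', ip_colorable e k' p -> k <= k'.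

Definition H_edge_nat (a b : nat) : bool :=
  [|| (a == 0) && (b == 1), (a == 1) && (b == 2), (a == 2) && (b == 3),
      (a == 3) && (b == 4), (a == 4) && (b == 0) | (a == 0) && (b == 5)].

Definition H_rel : rel 'I_6 :=
  fun x y => H_edge_nat x y || H_edge_nat y x.

Definition Knn_rel (n : nat) : rel ('I_n + 'I_n)%type :=
  fun x y => match x, y with
             | inl _, inr _ => true
             | inr _, inl _ => true
             | _, _ => false
             end.

(* Main.v *)
Require Import Defs.
From mathcomp Require Import all_boot.
Set Implicit Arguments. Unset Strict Implicit. Unset Printing Implicit Defensive.

Lemma ed_eq (T : finType) (v w u z : T) :
  (ed v w == ed u z) = ((v==u)&&(w==z)) || ((v==z)&&(w==u)).
Proof.
apply/eqP/idP.
  move=> h.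
  have hv : v \in ed u z by rewrite -h !inE eqxx.
  have hw : w \in ed u z by rewrite -h !inE eqxx orbT.
  have hu : u \in ed v w by rewrite h !inE eqxx.
  have hz : z \in ed v w by rewrite h !inE eqxx orbT.
  move: hv hw hu hz; rewrite !inE.
  by do 4 (case/orP => /eqP ?); subst; rewrite ?eqxx ?orbT.
by case/orP => /andP [/eqP -> /eqP ->] //; rewrite /ed setUC.
Qed.

Definition edb (T : finType) (a b c d : T) := ((a==c)&&(b==d)) || ((a==d)&&(b==c)).
Definition iadj (T : finType) (e : rel T) (v w u z : T) : bool :=
  [|| v == u, edb v w u z | e v u && (edb v u v w || edb v u u z)].
Lemma inc_adjE (T : finType) (e : rel T) v w u z : inc_adj e v w u z = iadj e v w u z.
Proof. by rewrite /inc_adj !ed_eq. Qed.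

Lemma fin_ic (T : finType) (e : rel T) k (c : T -> T -> nat) :
  [forall v, forall w, e v w ==> (c v w < k)] ->
  [forall v, forall w, forall u, forall z,
     (e v w && e u z && ((v, w) != (u, z)) && iadj e v w u z) ==> (c v w != c u z)] ->
  incidence_coloring e k c.
Proof.
move=> /forallP h1 /forallP h2; split.
  by move=> v w ew; move/forallP: (h1 v) => /(_ w) /implyP; apply.
move=> v w u z ew ez ne ia.
move/forallP: (h2 v) => /(_ w) /forallP /(_ u) /forallP /(_ z) /implyP; apply.
by rewrite ew ez ne -inc_adjE ia.
Qed.

Lemma fin_S1 (T : finType) (e : rel T) (c : T -> T -> nat) p :
  [forall v, size (S1 e c v) <= p] -> forall v, size (S1 e c v) <= p.
Proof. by move/forallP. Qed.

Lemma size_le (s : seq nat) k : uniq s -> all (fun x => x < k) s -> size s <= k.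
Proof.
move=> us /allP al; rewrite -(size_iota 0 k); apply: uniq_leq_size => //.
by move=> x /al xk; rewrite mem_iota.
Qed.

Lemma S1_eq (T : finType) (e : rel T) c v x y :
  size (S1 e c v) <= 1 -> e x v -> e y v -> c x v = c y v.
Proof.
move=> hs ex ey.
have mx : c x v \in S1 e c v by rewrite mem_undup; apply/mapP; exists x => //; rewrite mem_filter ex mem_enum.
have my : c y v \in S1 e c v by rewrite mem_undup; apply/mapP; exists y => //; rewrite mem_filter ey mem_enum.
move: hs mx my; case: (S1 e c v) => [|a [|b s]] //= _.
by rewrite !inE => /eqP -> /eqP ->.
Qed.

Lemma key (T : finType) (e : rel T) k c x v x' v' :
  simple_graph e -> ip_coloring e k 1 c -> e x v -> e x' v' -> v != v' ->
  (e v v' \/ exists y, e y v /\ e y v') -> c x v != c x' v'.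
Proof.
move=> [sym irr] [[_ hc] hs] exv ex'v' nvv' [evv'|[y [eyv eyv']]].
- have ev'v : e v' v by rewrite sym.
  rewrite (S1_eq (hs v) exv ev'v) (S1_eq (hs v') ex'v' evv').
  apply: hc => //.
    by apply/negP => /eqP [] h _; move: nvv'; rewrite h eqxx.
  by rewrite /inc_adj ed_eq !eqxx /= !orbT.
- rewrite (S1_eq (hs v) exv eyv) (S1_eq (hs v') ex'v' eyv').
  apply: hc => //; first by apply/negP => /eqP [] h; move: nvv'; rewrite h eqxx.
  by rewrite /inc_adj eqxx.
Qed.

Lemma irr_adj (T : finType) (e : rel T) v u w :
  simple_graph e -> e v w -> e u w -> inc_adj e v w u w -> v = u.
Proof.
move=> [sym irr] evw euw; rewrite /inc_adj /ed.
case/or3P => [/eqP //| /eqP h | /andP [evu /orP [] /eqP h]].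
- have : v \in [set u; w] by rewrite -h !inE eqxx.
  rewrite !inE => /orP [/eqP //| /eqP vw]; subst; by rewrite (negbTE (irr _)) in evw.
- have : u \in [set v; w] by rewrite -h !inE eqxx orbT.
  rewrite !inE => /orP [/eqP //| /eqP uw]; subst; by rewrite (negbTE (irr _)) in euw.
- have : v \in [set u; w] by rewrite -h !inE eqxx.
  rewrite !inE => /orP [/eqP //| /eqP vw]; subst; by rewrite (negbTE (irr _)) in evw.
Qed.

Lemma vertex_col (T : finType) (e : rel T) k (a : T -> nat) :
  simple_graph e -> (forall v, a v < k) -> injective a ->
  ip_coloring e k 1 (fun _ w => a w).
Proof.
move=> sg ak ia; split; first split => //.
  move=> v w u z evw euz ne iad; apply/negP => /eqP /ia wz; subst z.
  by move: ne; rewrite (irr_adj sg evw euz iad) eqxx.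
move=> v; rewrite /S1.
have : {subset undup [seq a v | u <- enum T & e u v] <= [:: a v]}.
  by move=> x; rewrite mem_undup => /mapP [u _ ->]; rewrite inE.
by move/(uniq_leq_size (undup_uniq _)).
Qed.

Lemma H_simple : simple_graph H_rel.
Proof. split; first by move=> x y; rewrite /H_rel orbC. by move=> x; rewrite /H_rel; case: x => [[|[|[|[|[|[|]]]]]] ?]. Qed.

Definition tab42 : seq (seq nat) :=
  [:: [:: 0;0;0;0;1;2]; [:: 3;0;1;0;0;0]; [:: 0;0;0;2;0;0];
      [:: 0;0;1;0;0;0]; [:: 3;0;0;2;0;0]; [:: 3;0;0;0;0;0]].
Definition c42 (v w : 'I_6) : nat := nth 0 (nth [::] tab42 v) w.

Definition ord6s : seq 'I_6 :=
  [:: @Ordinal 6 0 isT; @Ordinal 6 1 isT; @Ordinal 6 2 isT;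
      @Ordinal 6 3 isT; @Ordinal 6 4 isT; @Ordinal 6 5 isT].

Lemma mem6 (i : 'I_6) : i \in ord6s.
Proof. by case: i => [[|[|[|[|[|[|m]]]]]] Hm]. Qed.

Lemma fin_ic6 k (e : rel 'I_6) (c : 'I_6 -> 'I_6 -> nat) :
  all (fun v => all (fun w => e v w ==> (c v w < k)) ord6s) ord6s ->
  all (fun v => all (fun w => all (fun u => all (fun z =>
     (e v w && e u z && ((v, w) != (u, z)) && iadj e v w u z) ==> (c v w != c u z))
     ord6s) ord6s) ord6s) ord6s ->
  incidence_coloring e k c.
Proof.
move=> /allP h1 /allP h2; apply: fin_ic; apply/forallP => v.
  move/allP: (h1 v (mem6 v)) => h; apply/forallP => w; exact: (h w (mem6 w)).
move/allP: (h2 v (mem6 v)) => h; apply/forallP => w.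
move/allP: (h w (mem6 w)) => {}h; apply/forallP => u.
move/allP: (h u (mem6 u)) => {}h; apply/forallP => z.
exact: (h z (mem6 z)).
Qed.

Lemma enum6 : enum 'I_6 = ord6s.
Proof. by apply: (inj_map val_inj); rewrite val_enum_ord. Qed.

Lemma fin_S16 (e : rel 'I_6) (c : 'I_6 -> 'I_6 -> nat) p :
  all (fun v => size (undup [seq c u v | u <- ord6s & e u v]) <= p) ord6s ->
  forall v, size (S1 e c v) <= p.
Proof. move=> /allP h v; rewrite /S1 enum6; exact: (h v (mem6 v)). Qed.

Lemma c42_ok : ip_coloring H_rel 4 2 c42.
Proof.
split; first by apply: fin_ic6; vm_compute; reflexivity.
by apply: fin_S16; vm_compute; reflexivity.
Qed.

Definition c51 (v w : 'I_6) : nat := nth 0 [:: 0; 1; 2; 3; 4; 2] w.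

Lemma c51_ok : ip_coloring H_rel 5 1 c51.
Proof.
split; first by apply: fin_ic6; vm_compute; reflexivity.
by apply: fin_S16; vm_compute; reflexivity.
Qed.

Lemma adjc (T : finType) (e : rel T) k c v w u z :
  incidence_coloring e k c -> e v w -> e u z -> (v, w) != (u, z) ->
  iadj e v w u z -> c v w != c u z.
Proof. by move=> [_ h] a b d f; apply: h => //; rewrite inc_adjE. Qed.

Lemma ltk (T : finType) (e : rel T) k c v w :
  incidence_coloring e k c -> e v w -> c v w < k.
Proof. by move=> [h _]; apply: h. Qed.

Definition o0 := @Ordinal 6 0 isT.
Definition o1 := @Ordinal 6 1 isT.
Definition o2 := @Ordinal 6 2 isT.
Definition o3 := @Ordinal 6 3 isT.
Definition o4 := @Ordinal 6 4 isT.
Definition o5 := @Ordinal 6 5 isT.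

Lemma lowH4 k c : incidence_coloring H_rel k c -> 4 <= k.
Proof.
move=> hc.
have := size_le (s := [:: c o0 o1; c o0 o4; c o0 o5; c o1 o0]) (k := k).
apply.
  rewrite /= !inE !negb_or.
  rewrite (adjc (v:=o0) (w:=o1) (u:=o0) (z:=o4) hc isT isT isT isT).
  rewrite (adjc (v:=o0) (w:=o1) (u:=o0) (z:=o5) hc isT isT isT isT).
  rewrite (adjc (v:=o0) (w:=o1) (u:=o1) (z:=o0) hc isT isT isT isT).
  rewrite (adjc (v:=o0) (w:=o4) (u:=o0) (z:=o5) hc isT isT isT isT).
  rewrite (adjc (v:=o0) (w:=o4) (u:=o1) (z:=o0) hc isT isT isT isT).
  by rewrite (adjc (v:=o0) (w:=o5) (u:=o1) (z:=o0) hc isT isT isT isT).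
by rewrite /= !(ltk (e := H_rel) hc).
Qed.

Lemma lowH5 k c : ip_coloring H_rel k 1 c -> 5 <= k.
Proof.
move=> hc.
have K := fun x v x' v' => @key _ H_rel k c x v x' v' H_simple hc.
have := size_le (s := [:: c o1 o0; c o0 o1; c o1 o2; c o2 o3; c o3 o4]) (k := k).
apply.
  rewrite /= !inE !negb_or.
  rewrite (K o1 o0 o0 o1 isT isT isT (or_introl isT)).
  rewrite (K o1 o0 o1 o2 isT isT isT (or_intror (ex_intro _ o1 (conj isT isT)))).
  rewrite (K o1 o0 o2 o3 isT isT isT (or_intror (ex_intro _ o4 (conj isT isT)))).
  rewrite (K o1 o0 o3 o4 isT isT isT (or_introl isT)).
  rewrite (K o0 o1 o1 o2 isT isT isT (or_introl isT)).
  rewrite (K o0 o1 o2 o3 isT isT isT (or_intror (ex_intro _ o2 (conj isT isT)))).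
  rewrite (K o0 o1 o3 o4 isT isT isT (or_intror (ex_intro _ o0 (conj isT isT)))).
  rewrite (K o1 o2 o2 o3 isT isT isT (or_introl isT)).
  rewrite (K o1 o2 o3 o4 isT isT isT (or_intror (ex_intro _ o3 (conj isT isT)))).
  by rewrite (K o2 o3 o3 o4 isT isT isT (or_introl isT)).
by case: hc => [hc _]; rewrite /= !(ltk (e := H_rel) hc).
Qed.

Lemma Knn_simple n : simple_graph (@Knn_rel n).
Proof. by split; [case=> x; case=> y | case]. Qed.

Definition aK n (x : ('I_n + 'I_n)%type) : nat :=
  match x with inl i => i | inr j => n + j end.

Lemma Knn_up n : ip_colorable (@Knn_rel n) (2 * n) 1.
Proof.
exists (fun _ w => aK w); apply: vertex_col; first exact: Knn_simple.
  case=> i /=; rewrite mul2n -addnn.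
    by apply: leq_trans (ltn_ord i) (leq_addr _ _).
  by rewrite ltn_add2l.
case=> i; case=> j /=.
- by move/val_inj ->.
- by move=> h; move: (ltn_ord i); rewrite h ltnNge leq_addr.
- by move=> h; move: (ltn_ord j); rewrite -h ltnNge leq_addr.
- by move/addnI/val_inj ->.
Qed.

Lemma Knn_low n k c : 1 <= n -> ip_coloring (@Knn_rel n) k 1 c -> 2 * n <= k.
Proof.
move=> n1 hc.
pose o := Ordinal n1.
pose nb (x : ('I_n + 'I_n)%type) : ('I_n + 'I_n)%type :=
  match x with inl _ => inr o | inr _ => inl o end.
pose a x := c (nb x) x.
have enb x : Knn_rel (nb x) x by case: x.
have ainj : injective a.
  move=> x y axy; case: (eqVneq x y) => // nxy; exfalso.
  suff : a x != a y by rewrite axy eqxx.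
  apply: (key (Knn_simple n) hc (enb x) (enb y) nxy).
  case: x {axy nxy}; case: y => i j /=.
  - by right; exists (inr o).
  - by left.
  - by left.
  - by right; exists (inl o).
have := size_le (s := map a (enum (predT : pred ('I_n + 'I_n)%type))) (k := k).
rewrite size_map -cardE card_sum !card_ord addnn -mul2n; apply.
  by rewrite map_inj_uniq ?enum_uniq.
by case: hc => [hc _]; apply/allP => y /mapP [x _ ->]; apply: (ltk hc (enb x)).
Qed.

Theorem mainTheorem13 :
  (is_chi_i H_rel 4 /\ is_chi_ip H_rel 2 4 /\ is_chi_ip H_rel 1 5) /\
  (forall n : nat, 1 <= n -> is_chi_ip (@Knn_rel n) 1 (2 * n)).
Proof.
split; last first.
  move=> n n1; split; first exact: Knn_up.
  by move=> k [c hc]; apply: Knn_low hc.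
split; first split.
- by exists c42; case: c42_ok.
- by move=> k [c hc]; apply: lowH4 hc.
split; split.
- by exists c42; exact: c42_ok.
- by move=> k [c [hc _]]; apply: lowH4 hc.
- by exists c51; exact: c51_ok.
- by move=> k [c hc]; apply: lowH5 hc.
Qed.
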